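(* Let $G$ be a finite group and $S$ one of the Conway groups $Co_1, Co_2, Co_3$. If $|G| = |S|$, then $G$ is neither a Frobenius group nor a 2-Frobenius group.
   Context: A finite group $G$ is a 2-Frobenius group if it has a normal series $1 \trianglelefteq A \trianglelefteq B \trianglelefteq G$ such that $B$ is a Frobenius group with Frobenius kernel $A$ and $G/A$ is a Frobenius group with Frobenius kernel $B/A$. Orders: $|Co_1|=2^{21}\cdot3^9\cdot5^4\cdot7^2\cdot11\cdot13\cdot23$, $|Co_2|=2^{18}\cdot3^6\cdot5^3\cdot7\cdot11\cdot23$, $|Co_3|=2^{10}\cdot3^7\cdot5^3\cdot7\cdot11\cdot23$. *)

(* Defs.v *)
From mathcomp Require Import all_boot all_fingroup all_solvable.
Set Implicit Arguments. Unset Strict Implicit. Unset Printing Implicit Defensive.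
Local Open Scope group_scope.

Definition Co1_order : nat := (2^21 * 3^9 * 5^4 * 7^2 * 11 * 13 * 23)%N.
Definition Co2_order : nat := (2^18 * 3^6 * 5^3 * 7 * 11 * 23)%N.
Definition Co3_order : nat := (2^10 * 3^7 * 5^3 * 7 * 11 * 23)%N.

Definition two_Frobenius_group (gT : finGroupType) (G : {group gT}) : Prop :=
  exists (A B : {group gT}),
    [/\ A <| G, B <| G, A \subset B,
        [Frobenius B with kernel A]
      & [Frobenius (G / A) with kernel (B / A)]].

(* Main.v *)
From mathcomp Require Import all_boot all_fingroup all_solvable all_character.
Require Import Defs.
Set Implicit Arguments. Unset Strict Implicit. Unset Printing Implicit Defensive.

Definition pm (b e m : nat) : nat := iter e (fun x => (b * x) %% m) (1 %% m).

Lemma pmE b e m : pm b e m = b ^ e %% m.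
Proof.
elim: e => [|e IH] //=; rewrite /pm /= -/(pm b e m) IH modnMmr expnS //.
Qed.

Lemma dvd_pm b e m : 0 < b -> (m %| b ^ e - 1) = (pm b e m == 1 %% m).
Proof. by move=> b0; rewrite -eqn_mod_dvd ?expn_gt0 ?b0 // pmE eq_sym. Qed.

Fixpoint allst (k n : nat) : seq (seq nat) :=
  if n is n'.+1 then [seq x :: s | x <- iota 0 k, s <- allst k n'] else [:: [::]].

Lemma mem_allst k s : all (fun x => x < k) s -> s \in allst k (size s).
Proof.
elim: s => [|x s IH] //= /andP[xk /IH sk].
by apply/allpairsP; exists (x, s); rewrite /= mem_iota xk sk.
Qed.

Definition allidx (P : nat -> nat -> bool) k :=
  all (fun i => all (fun j => P i j) (iota 0 k)) (iota 0 k).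

Lemma allidxP P k i j : allidx P k -> i < k -> j < k -> P i j.
Proof.
move=> /allP H ik jk.
have /allP Hi : all (fun j => P i j) (iota 0 k) by apply: H; rewrite mem_iota.
by apply: Hi; rewrite mem_iota.
Qed.

Section Tabs.
Variables (ps es fs : seq nat).
Definition ms := [seq (nth 0 ps i ^ nth 0 fs i) | i <- iota 0 (size ps)].
Definition tabF := [seq [seq pm (nth 0 ps i) (nth 0 es i) (nth 0 ms j) == 1 %% (nth 0 ms j) | j <- iota 0 (size ps)]
                    | i <- iota 0 (size ps)].
Definition tabA := [seq [seq has (fun v => pm (nth 0 ps i) v (nth 0 ms j) == 1 %% (nth 0 ms j)) (iota 1 (nth 0 es i))
                      | j <- iota 0 (size ps)] | i <- iota 0 (size ps)].
Definition tabC := [seq [seq pm (nth 0 ps i) (nth 0 es i) (nth 0 ps j) == 1 %% (nth 0 ps j) | j <- iota 0 (size ps)]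
                    | i <- iota 0 (size ps)].
End Tabs.

Definition look (t : seq (seq bool)) i j := nth false (nth [::] t i) j.

Definition okF (k : nat) (t : seq (seq bool)) (s : seq nat) :=
  has (eq_op^~ 0) s && has (eq_op^~ 1) s &&
  allidx (fun i j => (nth 0 s i == 0) ==> (nth 0 s j == 1) ==> look t i j) k.

Definition xa x := (x == 1) || (x == 3).
Definition yb x := x == 0.
Definition zc x := (x == 2) || (x == 3).

Definition ok2 (k : nat) (tA tC : seq (seq bool)) (s : seq nat) :=
  [&& has xa s, has yb s, has zc s, all (fun x => x != 4) s &
  allidx (fun i j => (xa (nth 0 s i) && yb (nth 0 s j) ==> look tA i j) &&
                     (yb (nth 0 s i) && zc (nth 0 s j) ==> look tC i j)) k].

Definition chkF ps es fs :=
  let t := tabF ps es fs in all (fun s => ~~ okF (size ps) t s) (allst 2 (size ps)).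
Definition chk2 ps es fs :=
  let tA := tabA ps es fs in let tC := tabC ps es in
  all (fun s => ~~ ok2 (size ps) tA tC s) (allst 5 (size ps)).

Definition ps1 := [:: 2; 3; 5; 7; 11; 13; 23].
Definition es1 := [:: 21; 9; 4; 2; 1; 1; 1].
Definition ps2 := [:: 2; 3; 5; 7; 11; 23].
Definition es2 := [:: 18; 6; 3; 1; 1; 1].
Definition es3 := [:: 10; 7; 3; 1; 1; 1].
Definition fs1 := [:: 4; 4; 4; 2; 1; 1; 1].
Definition fs2 := [:: 4; 4; 3; 1; 1; 1].

Lemma c1' : chkF ps1 es1 fs1 && chk2 ps1 es1 fs1. Proof. vm_compute. reflexivity. Qed.
Lemma c2' : chkF ps2 es2 fs2 && chk2 ps2 es2 fs2. Proof. vm_compute. reflexivity. Qed.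
Lemma c3' : chkF ps2 es3 fs2 && chk2 ps2 es3 fs2. Proof. vm_compute. reflexivity. Qed.

Lemma look_tab (g : nat -> nat -> bool) k i j : i < k -> j < k ->
  look [seq [seq g i j | j <- iota 0 k] | i <- iota 0 k] i j = g i j.
Proof.
move=> ik jk; rewrite /look (nth_map 0) ?size_iota // nth_iota // add0n.
by rewrite (nth_map 0) ?size_iota // nth_iota.
Qed.

Lemma nth_ms ps fs j : j < size ps -> nth 0 (ms ps fs) j = nth 0 ps j ^ nth 0 fs j.
Proof. by move=> jk; rewrite (nth_map 0) ?size_iota // nth_iota. Qed.

Section Arith.
Variables (ps es fs : seq nat) (n : nat).
Hypotheses (prps : all prime ps) (szes : size es = size ps) (szfs : size fs = size ps)
  (fes : forall i, i < size ps -> nth 0 fs i <= nth 0 es i)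
  (F1 : forall p, prime p -> p %| n -> p \in ps)
  (F2 : forall i, i < size ps -> logn (nth 0 ps i) n = nth 0 es i)
  (n0 : 0 < n).

Let k := size ps.

Lemma prnth i : i < k -> prime (nth 0 ps i).
Proof. by move=> ik; apply: (allP prps); rewrite mem_nth. Qed.

Lemma dvd_ms i j x : i < k -> j < k ->
  nth 0 ps j ^ nth 0 es j %| nth 0 ps i ^ x - 1 -> pm (nth 0 ps i) x (nth 0 (ms ps fs) j) == 1 %% nth 0 (ms ps fs) j.
Proof.
move=> ik jk H; rewrite -dvd_pm ?prime_gt0 ?prnth // nth_ms //.
by apply: dvdn_trans H; rewrite dvdn_exp2l // fes.
Qed.

Lemma logn_coprime_part p x y : prime p -> p %| x -> coprime x y -> 0 < x -> 0 < y ->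
  logn p (x * y) = logn p x.
Proof.
move=> pp px cxy x0 y0; rewrite lognM // [logn p y](_ : _ = 0) ?addn0 //.
apply/eqP; rewrite -leqn0 leqNgt logn_gt0 mem_primes pp y0 /=.
apply/negP=> py; have := coprime_dvdr py (coprime_dvdl px cxy).
by rewrite prime_coprime // dvdnn.
Qed.


Lemma notboth p x y : prime p -> coprime x y -> p %| x -> p %| y -> False.
Proof.
move=> pp cxy px py; have := coprime_dvdr py (coprime_dvdl px cxy).
by rewrite prime_coprime // dvdnn.
Qed.

Lemma nth_s (f : nat -> nat) i : i < k -> nth 0 [seq f p | p <- ps] i = f (nth 0 ps i).
Proof. by move=> ik; rewrite (nth_map 0). Qed.

Lemma arithF kk h : n = kk * h -> coprime kk h -> 1 < kk -> 1 < h ->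
 (forall p r, prime p -> prime r -> ~~ (r %| kk) -> r ^ logn r n %| p ^ logn p kk - 1) ->
 okF k (tabF ps es fs) [seq (if p %| kk then 0 else 1) | p <- ps].
Proof.
move=> nE ckh k1 h1 HF.
have kk0 : 0 < kk by apply: ltnW.
have h0 : 0 < h by apply: ltnW.
rewrite /okF -andbA; apply/and3P; split.
- apply/hasP; exists 0 => //; apply/mapP; exists (pdiv kk); last by rewrite pdiv_dvd.
  by apply: F1; rewrite ?pdiv_prime // nE dvdn_mulr // pdiv_dvd.
- apply/hasP; exists 1 => //; apply/mapP; exists (pdiv h).
    by apply: F1; rewrite ?pdiv_prime // nE dvdn_mull // pdiv_dvd.
  case: ifP => // pk; exfalso; apply: (notboth (pdiv_prime h1) ckh pk (pdiv_dvd h)).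
- apply/allP=> i; rewrite mem_iota add0n => /andP[_ ik].
  apply/allP=> j; rewrite mem_iota add0n => /andP[_ jk].
  rewrite !nth_s // look_tab //.
  case: ifP => // pk; case: ifP => // rk /=.
  apply: dvd_ms => //; rewrite -(F2 ik) -(F2 jk).
  have := HF _ _ (prnth ik) (prnth jk) (negbT rk).
  have -> : logn (nth 0 ps i) n = logn (nth 0 ps i) kk.
    by rewrite nE logn_coprime_part ?prnth.
  by [].
Qed.


Hypothesis es0 : forall i, i < k -> 0 < nth 0 es i.

Lemma lognz p x : prime p -> ~~ (p %| x) -> logn p x = 0.
Proof.
move=> pp px; apply/eqP; rewrite -leqn0 leqNgt logn_gt0 mem_primes pp /=.
by rewrite (negbTE px) andbF.
Qed.

Definition state a bb c p :=
  if p %| bb then 0 else if (p %| a) && (p %| c) then 3 else if p %| a then 1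
  else if p %| c then 2 else 4.

Lemma xaS a bb c p : xa (state a bb c p) -> ~~ (p %| bb) /\ p %| a.
Proof. by rewrite /xa /state; case: (p %| bb); case: (p %| a); case: (p %| c). Qed.
Lemma ybS a bb c p : yb (state a bb c p) -> p %| bb.
Proof. by rewrite /yb /state; case: (p %| bb); case: (p %| a); case: (p %| c). Qed.
Lemma zcS a bb c p : zc (state a bb c p) -> ~~ (p %| bb) /\ p %| c.
Proof. by rewrite /zc /state; case: (p %| bb); case: (p %| a); case: (p %| c). Qed.

Lemma in_ps_idx p : p \in ps -> exists2 i, i < k & p = nth 0 ps i.
Proof. by move=> pin; exists (index p ps); rewrite ?index_mem ?nth_index. Qed.

Lemma arith2 a bb c : n = a * bb * c -> coprime a bb -> coprime bb c ->
  1 < a -> 1 < bb -> 1 < c ->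
  (forall p r, prime p -> prime r -> ~~ (r %| a) -> r ^ logn r (a * bb) %| p ^ logn p a - 1) ->
  (forall p q, prime p -> prime q -> ~~ (q %| bb) -> q ^ logn q (bb * c) %| p ^ logn p bb - 1) ->
  ok2 k (tabA ps es fs) (tabC ps es) [seq state a bb c p | p <- ps].
Proof.
move=> nE cab cbc a1 b1 c1 HA HC.
have a0 : 0 < a by apply: ltnW.
have b0 : 0 < bb by apply: ltnW.
have c0 : 0 < c by apply: ltnW.
have dn : forall p, p %| a \/ p %| bb \/ p %| c -> p %| n.
  move=> p [|[]] H; rewrite nE.
  - by rewrite dvdn_mulr // dvdn_mulr.
  - by rewrite dvdn_mulr // dvdn_mull.
  - by rewrite dvdn_mull.
have logE : forall p, prime p -> logn p n = logn p a + logn p bb + logn p c.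
  by move=> p pp; rewrite nE !lognM ?muln_gt0 ?a0 ?b0.
rewrite /ok2; apply/and5P; split.
- apply/hasP; exists (state a bb c (pdiv a)).
    by apply/mapP; exists (pdiv a) => //; apply: F1; rewrite ?pdiv_prime ?dn ?pdiv_dvd //; left.
  rewrite /state ifF ?pdiv_dvd /=; last first.
    by apply/negP=> H; apply: (notboth (pdiv_prime a1) cab (pdiv_dvd a) H).
  by case: (pdiv a %| c).
- apply/hasP; exists (state a bb c (pdiv bb)).
    by apply/mapP; exists (pdiv bb) => //; apply: F1; rewrite ?pdiv_prime ?dn ?pdiv_dvd //; right; left.
  by rewrite /state pdiv_dvd.
- apply/hasP; exists (state a bb c (pdiv c)).
    by apply/mapP; exists (pdiv c) => //; apply: F1; rewrite ?pdiv_prime ?dn ?pdiv_dvd //; right; right.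
  rewrite /state ifF ?pdiv_dvd /= ?andbT; last first.
    by apply/negP=> H; apply: (notboth (pdiv_prime c1) cbc H (pdiv_dvd c)).
  by case: (pdiv c %| a).
- rewrite all_map; apply/allP=> p /in_ps_idx[i ik ->] /=.
  have pp := prnth ik.
  have : nth 0 ps i %| n.
    by have := es0 ik; rewrite -(F2 ik) logn_gt0 mem_primes => /and3P[].
  rewrite nE !Euclid_dvdM // /state.
  by case: (_ %| a); case: (_ %| bb); case: (_ %| c).
- apply/allP=> i; rewrite mem_iota add0n => /andP[_ ik].
  apply/allP=> j; rewrite mem_iota add0n => /andP[_ jk].
  rewrite !nth_s // !look_tab //.
  have pp := prnth ik; have rp := prnth jk.
  set p := nth 0 ps i in pp *; set r := nth 0 ps j in rp *.
  apply/andP; split; apply/implyP => /andP[].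
  + move=> /xaS[pb pa] /ybS rb.
    have ra : ~~ (r %| a) by apply/negP=> ra; apply: (notboth rp cab ra rb).
    have rc : ~~ (r %| c) by apply/negP=> rc; apply: (notboth rp cbc rb rc).
    apply/hasP; exists (logn p a).
      rewrite mem_iota add1n ltnS -(F2 ik) logn_gt0 mem_primes pp a0 pa /=.
      by apply: dvdn_leq_log => //; apply: dn; left.
    apply: dvd_ms => //; rewrite -(F2 jk) logE // (lognz rp ra) (lognz rp rc) add0n addn0.
    by have := HA _ _ pp rp ra; rewrite lognM // (lognz rp ra).
  + move=> /ybS pb /zcS[rb rc].
    have pa : ~~ (p %| a) by apply/negP=> pa; apply: (notboth pp cab pa pb).
    have pc : ~~ (p %| c) by apply/negP=> pc; apply: (notboth pp cbc pb pc).
    rewrite -dvd_pm ?prime_gt0 // -(F2 ik) logE // (lognz pp pa) (lognz pp pc) add0n addn0.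
    apply: dvdn_trans (HC _ _ pp rp rb).
    rewrite -{1}(expn1 r) dvdn_exp2l // lognM // (lognz rp rb) add0n.
    by rewrite logn_gt0 mem_primes rp c0 rc.
Qed.

End Arith.

Local Open Scope group_scope.
Lemma frobA (gT : finGroupType) (G K : {group gT}) p r :
  [Frobenius G with kernel K] -> prime p -> prime r -> ~~ (r %| #|K|) ->
  (r ^ logn r #|G| %| p ^ logn p #|K| - 1)%N.
Proof.
move=> /Frobenius_kerP[ntK ltKG nsKG regK] pr_p pr_r rK.
have [P sylP] := Sylow_exists p K.
have cardP : #|P| = (p ^ logn p #|K|)%N by rewrite (card_Hall sylP) p_part.
have [sPK _ _] := and3P sylP.
pose L := 'N_G(P)%G.
have defG : K * L = G := Frattini_arg nsKG sylP.
have [R sylR] := Sylow_exists r L.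
have [sRL _ _] := and3P sylR.
have cRK : coprime #|K| #|R|.
  rewrite (card_Hall sylR) p_part coprimeXr // coprime_sym.
  by rewrite prime_coprime.
have logL : logn r #|L| = logn r #|G|.
  have := mul_cardG K L; rewrite defG => E.
  have := congr1 (logn r) E.
  rewrite !lognM ?cardG_gt0 //.
  have l0 : forall n, (n %| #|K|)%N -> logn r n = 0%N.
    move=> n dn; apply/eqP; rewrite -leqn0 leqNgt logn_gt0 mem_primes pr_r /=.
    apply/negP=> /andP[n0 rn]; by rewrite (dvdn_trans rn dn) in rK.
  by rewrite (l0 #|K|) // (l0 #|K :&: L|) ?cardSg ?subsetIl // add0n addn0.
have cardR : #|R| = (r ^ logn r #|G|)%N by rewrite (card_Hall sylR) p_part logL.
have sLN : L \subset 'N(P) by rewrite subsetIr.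
have sLG : L \subset G by rewrite subsetIl.
have tiKR := coprime_TIg cRK.
have reg : semiregular P R.
  move=> x /setD1P[ntx Rx]; apply/trivgP/subsetP=> y /setIP[Py cxy].
  rewrite inE; apply/negPn/negP=> nty.
  have Ky : y \in K^# by rewrite !inE nty (subsetP sPK).
  have xK : x \in K.
    apply: (subsetP (regK y Ky)); rewrite inE (subsetP sLG) ?(subsetP sRL) //=.
    by rewrite cent1C.
  have : x \in K :&: R by rewrite inE xK.
  by rewrite tiKR inE (negPf ntx).
have := regular_norm_dvd_pred (subset_trans sRL sLN) reg.
by rewrite cardR cardP subn1.
Qed.

Local Close Scope group_scope.

Section Final.
Variables (ps es fs : seq nat) (n : nat).
Hypotheses (prps : all prime ps) (szes : size es = size ps) (szfs : size fs = size ps)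
  (fes : forall i, i < size ps -> nth 0 fs i <= nth 0 es i)
  (F1 : forall p, prime p -> p %| n -> p \in ps)
  (F2 : forall i, i < size ps -> logn (nth 0 ps i) n = nth 0 es i)
  (n0 : 0 < n) (es0 : forall i, i < size ps -> 0 < nth 0 es i).

Lemma finalF kk h : chkF ps es fs -> n = kk * h -> coprime kk h -> 1 < kk -> 1 < h ->
 (forall p r, prime p -> prime r -> ~~ (r %| kk) -> r ^ logn r n %| p ^ logn p kk - 1) ->
 False.
Proof using prps szes szfs fes F1 F2 n0 es0.
move=> /allP chk nE ckh k1 h1 HF.
have := arithF prps fes F1 F2 nE ckh k1 h1 HF.
apply/negP; apply: chk.
rewrite -(size_map (fun p => if p %| kk then 0 else 1)); apply: mem_allst.
by apply/allP=> x /mapP[p _ ->]; case: ifP.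
Qed.

Lemma final2 a bb c : chk2 ps es fs -> n = a * bb * c -> coprime a bb -> coprime bb c ->
  1 < a -> 1 < bb -> 1 < c ->
  (forall p r, prime p -> prime r -> ~~ (r %| a) -> r ^ logn r (a * bb) %| p ^ logn p a - 1) ->
  (forall p q, prime p -> prime q -> ~~ (q %| bb) -> q ^ logn q (bb * c) %| p ^ logn p bb - 1) ->
  False.
Proof using prps szes szfs fes F1 F2 n0 es0.
move=> /allP chk nE cab cbc a1 b1 c1 HA HC.
have := arith2 prps fes F1 F2 n0 es0 nE cab cbc a1 b1 c1 HA HC.
apply/negP; apply: chk.
rewrite -(size_map (state a bb c)); apply: mem_allst.
apply/allP=> x /mapP[p _ ->]; rewrite /state.
by case: (p %| bb); case: (p %| a); case: (p %| c).
Qed.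

End Final.

Lemma logn7 p (q1 q2 q3 q4 q5 q6 q7 e1 e2 e3 e4 : nat) :
  prime q1 -> prime q2 -> prime q3 -> prime q4 -> prime q5 -> prime q6 -> prime q7 ->
  logn p (q1 ^ e1 * q2 ^ e2 * q3 ^ e3 * q4 ^ e4 * q5 * q6 * q7) =
  e1 * (p == q1) + e2 * (p == q2) + e3 * (p == q3) + e4 * (p == q4) + (p == q5) + (p == q6) + (p == q7).
Proof.
move=> p1 p2 p3 p4 p5 p6 p7.
have g1 := prime_gt0 p1; have g2 := prime_gt0 p2; have g3 := prime_gt0 p3.
have g4 := prime_gt0 p4; have g5 := prime_gt0 p5; have g6 := prime_gt0 p6; have g7 := prime_gt0 p7.
rewrite !lognM ?muln_gt0 ?expn_gt0 ?g1 ?g2 ?g3 ?g4 ?g5 ?g6 ?g7 //.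
by rewrite !lognX (logn_prime _ p1) (logn_prime _ p2) (logn_prime _ p3) (logn_prime _ p4)
  (logn_prime _ p5) (logn_prime _ p6) (logn_prime _ p7).
Qed.
Lemma logn6 p (q1 q2 q3 q4 q5 q6 e1 e2 e3 : nat) :
  prime q1 -> prime q2 -> prime q3 -> prime q4 -> prime q5 -> prime q6 ->
  logn p (q1 ^ e1 * q2 ^ e2 * q3 ^ e3 * q4 * q5 * q6) =
  e1 * (p == q1) + e2 * (p == q2) + e3 * (p == q3) + (p == q4) + (p == q5) + (p == q6).
Proof.
move=> p1 p2 p3 p4 p5 p6.
have g1 := prime_gt0 p1; have g2 := prime_gt0 p2; have g3 := prime_gt0 p3.
have g4 := prime_gt0 p4; have g5 := prime_gt0 p5; have g6 := prime_gt0 p6.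
rewrite !lognM ?muln_gt0 ?expn_gt0 ?g1 ?g2 ?g3 ?g4 ?g5 ?g6 //.
by rewrite !lognX (logn_prime _ p1) (logn_prime _ p2) (logn_prime _ p3) (logn_prime _ p4)
  (logn_prime _ p5) (logn_prime _ p6).
Qed.
Lemma F2_1 i : i < 7 -> logn (nth 0 [:: 2; 3; 5; 7; 11; 13; 23] i) Co1_order = nth 0 [:: 21; 9; 4; 2; 1; 1; 1] i.
Proof.
rewrite /Co1_order.
do 7 (case: i => [|i]; [by move=> _; rewrite logn7 | ]).
by [].
Qed.
Lemma F2_2 i : i < 6 -> logn (nth 0 [:: 2; 3; 5; 7; 11; 23] i) Co2_order = nth 0 [:: 18; 6; 3; 1; 1; 1] i.
Proof.
rewrite /Co2_order.
do 6 (case: i => [|i]; [by move=> _; rewrite logn6 | ]).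
by [].
Qed.
Lemma F2_3 i : i < 6 -> logn (nth 0 [:: 2; 3; 5; 7; 11; 23] i) Co3_order = nth 0 [:: 10; 7; 3; 1; 1; 1] i.
Proof.
rewrite /Co3_order.
do 6 (case: i => [|i]; [by move=> _; rewrite logn6 | ]).
by [].
Qed.
Lemma F1_1 p : prime p -> (p %| Co1_order)%N -> p \in [:: 2; 3; 5; 7; 11; 13; 23].
Proof.
move=> pp; rewrite /Co1_order !Euclid_dvdM // !dvdn_prime2 // !inE.
by case: (p == 2); case: (p == 3); case: (p == 5); case: (p == 7); case: (p == 11); case: (p == 13); case: (p == 23).
Qed.

Lemma F1_2 p : prime p -> (p %| Co2_order)%N -> p \in [:: 2; 3; 5; 7; 11; 23].
Proof.
move=> pp; rewrite /Co2_order !Euclid_dvdM // !dvdn_prime2 // !inE.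
by case: (p == 2); case: (p == 3); case: (p == 5); case: (p == 7); case: (p == 11); case: (p == 23).
Qed.

Lemma F1_3 p : prime p -> (p %| Co3_order)%N -> p \in [:: 2; 3; 5; 7; 11; 23].
Proof.
move=> pp; rewrite /Co3_order !Euclid_dvdM // !dvdn_prime2 // !inE.
by case: (p == 2); case: (p == 3); case: (p == 5); case: (p == 7); case: (p == 11); case: (p == 23).
Qed.

Local Open Scope group_scope.

Lemma group_main (gT : finGroupType) (G : {group gT}) ps es fs :
  all prime ps -> size es = size ps -> size fs = size ps ->
  (forall i, i < size ps -> nth 0 fs i <= nth 0 es i) ->
  (forall p, prime p -> p %| #|G| -> p \in ps) ->
  (forall i, i < size ps -> logn (nth 0 ps i) #|G| = nth 0 es i) ->
  (forall i, i < size ps -> 0 < nth 0 es i) ->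
  chkF ps es fs -> chk2 ps es fs ->
  ~~ [Frobenius G] /\ ~ two_Frobenius_group G.
Proof.
move=> prps szes szfs fes F1 F2 es0 chF ch2.
have n0 : 0 < #|G| := cardG_gt0 G.
split.
  apply/negP=> /existsP[H frobH].
  have [K frobGK] := Frobenius_kernel_exists frobH.
  have frobK := FrobeniusWker frobGK.
  have [ntK ltKG nsKG _] := Frobenius_kerP frobK.
  apply: (finalF prps szes szfs fes F1 F2 n0 es0 (kk := #|K|) (h := #|G : K|) chF).
  - by rewrite Lagrange // normal_sub.
  - exact: Frobenius_ker_coprime frobK.
  - by rewrite cardG_gt1.
  - by rewrite indexg_gt1 proper_subn.
  - by move=> p r pp pr rK; apply: frobA.
move=> [A [B [nAG nBG sAB frobB frobQ]]].
have [ntA ltAB _ _] := Frobenius_kerP frobB.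
have [ntBA ltBAGA _ _] := Frobenius_kerP frobQ.
have sAG := normal_sub nAG; have nAG' := normal_norm nAG.
have sBG := normal_sub nBG.
have nAB : B \subset 'N(A) := subset_trans sBG nAG'.
have cBA : #|B / A| = #|B : A| := card_quotient nAB.
have cGA : #|G / A| = #|G : A| := card_quotient nAG'.
have sBAGA : B / A \subset G / A := quotientS A sBG.
have cB : #|B| = (#|A| * #|B / A|)%N by rewrite cBA Lagrange.
have cGAE : #|G / A| = (#|B / A| * #|G / A : B / A|)%N by rewrite Lagrange.
apply: (final2 prps szes szfs fes F1 F2 n0 es0 (a := #|A|) (bb := #|B / A|)
           (c := #|G / A : B / A|) ch2).
- by rewrite -mulnA -cGAE cGA Lagrange.
- by rewrite cBA; apply: Frobenius_ker_coprime frobB.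
- exact: Frobenius_ker_coprime frobQ.
- by rewrite cardG_gt1.
- by rewrite cardG_gt1.
- by rewrite indexg_gt1 proper_subn.
- by move=> p r pp pr rA; rewrite -cB; apply: frobA.
- by move=> p q pp pq qB; rewrite -cGAE; apply: frobA.
Qed.

Lemma idx_of (P : nat -> bool) k : all P (iota 0 k) -> forall i, i < k -> P i.
Proof. by move=> /allP H i ik; apply: H; rewrite mem_iota. Qed.

Unset Implicit Arguments.

Theorem lemma2p10 (gT : finGroupType) (G : {group gT}) :
  #|G| \in [:: Co1_order; Co2_order; Co3_order] ->
  ~~ [Frobenius G] /\ ~ two_Frobenius_group G.
Proof.
rewrite !inE => /or3P[] /eqP nE.
- have /andP[cF c2] := c1'.
  apply: (group_main (ps := ps1) (es := es1) (fs := fs1) _ _ _ _ _ _ _ cF c2).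
  + by vm_compute.
  + by [].
  + by [].
  + by apply: (idx_of (P := fun i => nth 0 _ i <= nth 0 _ i)); vm_compute.
  + by rewrite nE; apply: F1_1.
  + by rewrite nE; apply: F2_1.
  + by apply: (idx_of (P := fun i => 0 < nth 0 _ i)); vm_compute.
- have /andP[cF c2] := c2'.
  apply: (group_main (ps := ps2) (es := es2) (fs := fs2) _ _ _ _ _ _ _ cF c2).
  + by vm_compute.
  + by [].
  + by [].
  + by apply: (idx_of (P := fun i => nth 0 _ i <= nth 0 _ i)); vm_compute.
  + by rewrite nE; apply: F1_2.
  + by rewrite nE; apply: F2_2.
  + by apply: (idx_of (P := fun i => 0 < nth 0 _ i)); vm_compute.
- have /andP[cF c2] := c3'.
  apply: (group_main (ps := ps2) (es := es3) (fs := fs2) _ _ _ _ _ _ _ cF c2).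
  + by vm_compute.
  + by [].
  + by [].
  + by apply: (idx_of (P := fun i => nth 0 _ i <= nth 0 _ i)); vm_compute.
  + by rewrite nE; apply: F1_3.
  + by rewrite nE; apply: F2_3.
  + by apply: (idx_of (P := fun i => 0 < nth 0 _ i)); vm_compute.
Qed.
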